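(* Let $I\subseteq S=\Bbbk[x_1,\dots,x_n]$ be a squarefree monomial ideal and let $L$ be its squarefree lexification. Then $L\subseteq(x_1)$ if and only if $I\subseteq(x_i)$ for some variable $x_i$.
   Context: Let $\Bbbk$ be a field, $S=\Bbbk[x_1,\dots,x_n]$, $R=S/(x_1^2,\dots,x_n^2)$. A monomial ideal is squarefree if its minimal monomial generators are squarefree. A monomial ideal of $R$ is lex if each degree component is spanned by an initial segment, in the lexicographic order with $x_1>\dots>x_n$, of the squarefree monomials of that degree. A squarefree monomial ideal $L\subseteq S$ is squarefree lex if $LR$ is lex in $R$. The squarefree lexification of a squarefree monomial ideal $I\subseteq S$ is the unique squarefree lex ideal $L\subseteq S$ having the same Hilbert function as $I$ in $S$ (equivalently, $LR$ is the lex ideal of $R$ with the same Hilbert function as $IR$). *)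

(* Defs.v *)
(* Variables x_1,...,x_n are indexed by 'I_n
   (x_1 <-> index 0).  A monomial is an exponent vector 'I_n -> nat; a
   squarefree monomial x_A is identified with its support A : {set 'I_n}.
   A squarefree monomial ideal is given by a (finite) set of squarefree
   monomial generators  gens : {set {set 'I_n}}. *)
From mathcomp Require Import all_boot.
Set Implicit Arguments. Unset Strict Implicit. Unset Printing Implicit Defensive.

Definition mon_in (n : nat) (gens : {set {set 'I_n}}) (m : 'I_n -> nat) : bool :=
  [exists G in gens, [forall i in G, 0 < m i]].

Definition sqf_mon (n : nat) (A : {set 'I_n}) : 'I_n -> nat :=
  fun i => nat_of_bool (i \in A).

(* Hilbert function of the ideal in S: number of monomials of degree d in it
   (= dim_k I_d).  A monomial of degree d has all exponents <= d. *)
Definition hilb (n : nat) (gens : {set {set 'I_n}}) (d : nat) : nat :=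
  #|[set m : {ffun 'I_n -> 'I_d.+1} |
      ((\sum_(i < n) (m i : nat)) == d) && mon_in gens (fun i => (m i : nat))]|.

(* lex order with x_1 > ... > x_n on squarefree monomials: x_A >lex x_B iff the
   first variable where they differ occurs in A *)
Definition lex_gt (n : nat) (A B : {set 'I_n}) : bool :=
  [exists i : 'I_n, [&& i \in A, i \notin B &
     [forall j : 'I_n, (j < i)%N ==> ((j \in A) == (j \in B))]]].

(* L is squarefree lex: LR is lex in R = S/(x_1^2,...,x_n^2), i.e. in each
   degree the squarefree monomials of L form an initial lex segment *)
Definition sqf_lex (n : nat) (L : {set {set 'I_n}}) : Prop :=
  forall A B : {set 'I_n}, #|A| = #|B| -> lex_gt B A ->
    mon_in L (sqf_mon A) -> mon_in L (sqf_mon B).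

Definition ideal_sub_var (n : nat) (gens : {set {set 'I_n}}) (i : 'I_n) : Prop :=
  forall m : 'I_n -> nat, mon_in gens m -> 0 < m i.

(* Main.v *)
Require Import Defs.
From mathcomp Require Import all_boot.
From mathcomp Require Import zify.
Set Implicit Arguments. Unset Strict Implicit. Unset Printing Implicit Defensive.

Lemma sub_varP n (g : {set {set 'I_n}}) i :
  ideal_sub_var g i <-> [forall G in g, i \in G].
Proof.
split.
- move=> H; apply/forall_inP => G GinG.
  have : 0 < sqf_mon G i.
    apply: H; apply/exists_inP; exists G => //; apply/forall_inP => x xG.
    by rewrite /sqf_mon xG.
  by rewrite /sqf_mon; case: (i \in G).
- move=> /forall_inP H m /exists_inP [G GinG /forall_inP HG]; exact: HG (H G GinG).
Qed.

Definition Vset n d (i : 'I_n) := [set m : {ffun 'I_n -> 'I_d.+1} |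
  ((\sum_(x < n) (m x : nat)) == d) && ((m i : nat) == 0)].
Definition Uset n d := [set m : {ffun 'I_n -> 'I_d.+1} |
  ((\sum_(x < n) (m x : nat)) == d) &&
  [exists a, exists b, [&& a != b, (m a : nat) == 0 & (m b : nat) == 0]]].
Definition Out n (g : {set {set 'I_n}}) d := [set m : {ffun 'I_n -> 'I_d.+1} |
  ((\sum_(x < n) (m x : nat)) == d) && ~~ mon_in g (fun x => (m x : nat))].

Lemma hilb_out n (g : {set {set 'I_n}}) d : hilb g d + #|Out g d| =
  #|[set m : {ffun 'I_n -> 'I_d.+1} | (\sum_(x < n) (m x : nat)) == d]|.
Proof.
rewrite -(cardsID [set m : {ffun 'I_n -> 'I_d.+1} | mon_in g (fun x => (m x : nat))]
  [set m : {ffun 'I_n -> 'I_d.+1} | (\sum_(x < n) (m x : nat)) == d]).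
rewrite /hilb /Out; congr (_ + _); apply: eq_card => m; rewrite !inE //.
by rewrite andbC.
Qed.

Lemma V_sub_Out n (g : {set {set 'I_n}}) d i :
  ideal_sub_var g i -> Vset d i \subset Out g d.
Proof.
move=> H; apply/subsetP => m; rewrite !inE => /andP[-> /eqP mi0] /=.
by apply/negP => /H; rewrite mi0.
Qed.

Lemma Out_sub_U n (hn : 0 < n) (g : {set {set 'I_n}}) d :
  (forall j, ~~ [forall G in g, j \in G]) -> Out g d \subset Uset n d.
Proof.
move=> H; apply/subsetP => m; rewrite !inE => /andP[-> nin] /=.
apply: contraNT nin => no2.
have Z : forall x, (m x : nat) == 0 -> x = odflt (Ordinal hn) [pick a | (m a : nat) == 0].
  move=> x mx0; case: pickP => [a ma0|/(_ x)]; last by rewrite mx0.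
  case: (eqVneq x a) => // xa; move/negP: no2; case.
  by apply/existsP; exists x; apply/existsP; exists a; rewrite xa mx0 ma0.
move: Z; set j := odflt _ _ => Z.
have /forall_inPn [G GinG jG] := H j.
apply/exists_inP; exists G => //; apply/forall_inP => x xG.
rewrite lt0n; apply/negP => /Z xj.
by move: jG; rewrite -xj xG.
Qed.

Lemma card_bigcup_le (I T : finType) (F : I -> {set T}) :
  #|\bigcup_i F i| <= \sum_i #|F i|.
Proof.
apply: (big_ind2 (fun (A : {set T}) k => #|A| <= k)) => [|A B a b HA HB|i _] //.
- by rewrite cards0.
- exact: leq_trans (leq_card_setU A a).1 (leq_add HA HB).
Qed.

Definition Wset n d (a b : 'I_n) := if a == b then set0 else
  [set m : {ffun 'I_n -> 'I_d.+1} |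
    [&& (\sum_(x < n) (m x : nat)) == d, (m a : nat) == 0 & (m b : nat) == 0]].

Lemma W_card n d (a b : 'I_n) : 3 <= n -> #|Wset d a b| <= d.+1 ^ (n - 3).
Proof.
move=> n3; rewrite /Wset; case: eqP => [_|/eqP ab]; first by rewrite cards0.
have [c cab] : exists c, c \notin [set a; b].
  have : 0 < #|~: [set a; b]| by rewrite cardsCs setCK cards2 ab card_ord; lia.
  by case/card_gt0P => c; rewrite inE => ?; exists c.
set D := c |: [set a; b].
pose phi (m : {ffun 'I_n -> 'I_d.+1}) : {ffun 'I_n -> 'I_d.+1} :=
  [ffun x => if x \in D then ord0 else m x].
set Wab := [set m : {ffun 'I_n -> 'I_d.+1} | _].
have inj : {in Wab &, injective phi}.
  move=> m1 m2; rewrite !inE => /and3P[/eqP s1 /eqP a1 /eqP b1].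
  move=> /and3P[/eqP s2 /eqP a2 /eqP b2] /ffunP E.
  have Ex : forall x, x != c -> m1 x = m2 x.
    move=> x xc; have := E x; rewrite !ffunE; case: ifP => [xD _|_ //].
    apply/val_inj; move: xD; rewrite !inE (negbTE xc) /= => /orP[]/eqP->.
      by rewrite a1 a2.
    by rewrite b1 b2.
  apply/ffunP => x; case: (eqVneq x c) => [->|/Ex //].
  apply/val_inj; have : \sum_(x < n) (m1 x : nat) = \sum_(x < n) (m2 x : nat).
    by rewrite s1 s2.
  rewrite (bigD1 c) //= [X in _ = X](bigD1 c) //=.
  have -> : \sum_(i < n | i != c) (m1 i : nat) = \sum_(i < n | i != c) (m2 i : nat).
    by apply: eq_bigr => i ic; rewrite Ex.
  by move/addIn.
rewrite -(card_in_imset inj).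
apply: (@leq_trans #|pffun_on (ord0 : 'I_d.+1) (~: D) [set: 'I_d.+1]|).
  apply: subset_leq_card; apply/subsetP => _ /imsetP[m _ ->]; apply/pffun_onP; split.
    apply/subsetP => x; rewrite !inE ffunE; case: ifP => [_|]; first by rewrite eqxx.
    by rewrite /D !inE => ->.
  by move=> y _; rewrite inE.
rewrite card_pffun_on cardsT card_ord cardsCs setCK cardsU1 cards2 ab cab card_ord.
by [].
Qed.

Lemma V_card n d K (i : 'I_n) : 2 <= n -> n * K <= d -> K.+1 ^ (n - 2) <= #|Vset d i|.
Proof.
move=> n2 nKd.
have [j ji] : exists j, j != i.
  have : 0 < #|~: [set i]| by rewrite cardsCs setCK cards1 card_ord; lia.
  by case/card_gt0P => j; rewrite !inE => ?; exists j.
set D := ~: [set i; j].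
pose S (f : {ffun 'I_n -> 'I_K.+1}) := \sum_(y < n) (f y : nat).
pose psi (f : {ffun 'I_n -> 'I_K.+1}) : {ffun 'I_n -> 'I_d.+1} :=
  [ffun x => if x == j then inord (d - S f) else inord (f x)].
have fle : forall (f : {ffun 'I_n -> 'I_K.+1}) x, (f x : nat) < d.+1.
  move=> f x; have := ltn_ord (f x); have : K <= n * K by apply: leq_pmull; lia.
  lia.
have Sle : forall f, S f <= d.
  move=> f; apply: leq_trans nKd; rewrite /S.
  apply: (@leq_trans (\sum_(y < n) K)); first by apply: leq_sum => y _; rewrite -ltnS.
  by rewrite big_const_ord iter_addn_0 mulnC.
have z : forall f, f \in pffun_on (ord0 : 'I_K.+1) D [set: 'I_K.+1] ->
    forall x, x \notin D -> f x = ord0.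
  move=> f /pffun_onP[/subsetP Hs _] x xD; apply/eqP; apply: contraNT xD => nz.
  by apply: Hs; rewrite inE.
have iD : i \notin D by rewrite !inE eqxx.
have jD : j \notin D by rewrite !inE eqxx orbT.
have inj : {in pffun_on (ord0 : 'I_K.+1) D [set: 'I_K.+1] &, injective psi}.
  move=> f1 f2 H1 H2 /ffunP E; apply/ffunP => x.
  case: (eqVneq x j) => [->|xj]; first by rewrite (z _ H1 _ jD) (z _ H2 _ jD).
  have := E x; rewrite !ffunE (negbTE xj) => /(congr1 val).
  by rewrite /= !inordK //; move/val_inj.
have -> : n - 2 = #|D| by rewrite cardsCs setCK cards2 eq_sym ji card_ord.
have -> : K.+1 ^ #|D| = #|pffun_on (ord0 : 'I_K.+1) D [set: 'I_K.+1]|.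
  by rewrite card_pffun_on cardsT card_ord.
rewrite -(card_in_imset inj); apply: subset_leq_card.
apply/subsetP => _ /imsetP[f Hf ->]; rewrite inE; apply/andP; split; last first.
  have ij : i != j by rewrite eq_sym.
  by rewrite ffunE (negbTE ij) (z _ Hf _ iD) inordK.
rewrite (bigD1 j) //= ffunE eqxx inordK; last by rewrite ltnS leq_subr.
have -> : \sum_(x < n | x != j) (psi f x : nat) = S f.
  rewrite /S [X in _ = X](bigD1 j) //= (z _ Hf _ jD) add0n.
  by apply: eq_bigr => x xj; rewrite ffunE (negbTE xj) inordK.
by rewrite subnK.
Qed.

Lemma leq_expr a b e : a <= b -> a ^ e <= b ^ e.
Proof. by move=> ab; elim: e => // e IH; rewrite !expnS leq_mul. Qed.

Lemma count_main n (hn : 0 < n) (i : 'I_n) : exists d, #|Uset n d| < #|Vset d i|.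
Proof.
case: n hn i => [//|[|[|m]]] hn i.
- exists 0.
  have -> : Uset 1 0 = set0.
    apply/setP => f; rewrite !inE; apply/negbTE; apply/negP.
    move=> /andP[_ /existsP[a /existsP[b /and3P[ab _ _]]]].
    by rewrite (ord1 a) (ord1 b) eqxx in ab.
  rewrite cards0 card_gt0; apply/set0Pn; exists [ffun => (ord0 : 'I_1)].
  rewrite inE ffunE eqxx andbT; apply/eqP; apply: big1 => x _; by rewrite ffunE.
- exists 1.
  have -> : Uset 2 1 = set0.
    apply/setP => f; rewrite !inE; apply/negbTE; apply/negP.
    move=> /andP[/eqP s /existsP[a /existsP[b /and3P[ab /eqP fa /eqP fb]]]].
    suff : \sum_(x < 2) (f x : nat) = 0 by rewrite s.
    apply: big1 => x _.
    have : (x == a) || (x == b).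
      move: ab; rewrite -!(inj_eq val_inj) /=.
      have := ltn_ord a; have := ltn_ord b; have := ltn_ord x; lia.
    by case/orP => /eqP ->.
  rewrite cards0; apply: leq_trans (V_card (K := 0) i _ _) => //.
- set N := m.+3; set K := N ^ N; exists (N * K).
  apply: leq_trans (V_card (K := K) i _ _) => //.
  pose B := (N * K).+1 ^ (N - 3).
  have HU : #|Uset N (N * K)| <= N * (N * B).
    apply: (@leq_trans #|\bigcup_a \bigcup_b Wset (N * K) a b|).
      apply: subset_leq_card; apply/subsetP => f; rewrite inE.
      move=> /andP[s /existsP[a /existsP[b /and3P[ab fa fb]]]].
      apply/bigcupP; exists a => //; apply/bigcupP; exists b => //.
      by rewrite /Wset (negbTE ab) inE s fa fb.
    apply: leq_trans (card_bigcup_le _) _.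
    apply: (@leq_trans (\sum_(a < N) (N * B))); last first.
      by rewrite big_const_ord iter_addn_0 mulnC.
    apply: leq_sum => a _; apply: leq_trans (card_bigcup_le _) _.
    apply: (@leq_trans (\sum_(b < N) B)); last first.
      by rewrite big_const_ord iter_addn_0 mulnC.
    apply: leq_sum => b _; exact: W_card.
  apply: leq_ltn_trans HU _.
  have -> : N - 2 = (N - 3).+1 by rewrite /N; lia.
  rewrite /B expnS.
  have HB : (N * K).+1 ^ (N - 3) <= N ^ (N - 3) * K.+1 ^ (N - 3).
    rewrite -expnMn; apply: leq_expr; rewrite mulnS; lia.
  apply: (@leq_ltn_trans (N * (N * (N ^ (N - 3) * K.+1 ^ (N - 3))))).
    by rewrite !leq_mul2l HB !orbT.
  rewrite !mulnA ltn_pmul2r ?expn_gt0 //.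
  have -> : N * N * N ^ (N - 3) = N ^ (N - 1).
    have -> : N - 1 = (N - 3).+2 by rewrite /N; lia.
    by rewrite !expnS mulnA.
  rewrite ltnS /K leq_exp2l /N; lia.
Qed.

Lemma no_sub_contra n (hn : 0 < n) (A B : {set {set 'I_n}}) (i : 'I_n) :
  (forall d, hilb A d = hilb B d) -> ideal_sub_var A i ->
  (forall j, ~~ [forall G in B, j \in G]) -> False.
Proof.
move=> hAB HA HB.
have [d Hd] := count_main hn i.
have e : #|Out A d| = #|Out B d|.
  by apply/(@addnI (hilb A d)); rewrite {2}hAB !hilb_out.
have h1 := subset_leq_card (V_sub_Out d HA).
have h2 := subset_leq_card (Out_sub_U hn d HB).
by move: Hd; rewrite ltnNge (leq_trans h1) // e.
Qed.

Theorem lemma3p5 (n : nat) (hn : 0 < n) (I L : {set {set 'I_n}}) :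
  sqf_lex L -> (forall d : nat, hilb L d = hilb I d) ->
  (ideal_sub_var L (Ordinal hn) <-> exists i : 'I_n, ideal_sub_var I i).
Proof.
move=> lexL hLI; split.
- move=> HL.
  case: (boolP [exists i, [forall G in I, i \in G]]) => [/existsP[i Hi]|H].
    by exists i; apply/sub_varP.
  exfalso; apply: (no_sub_contra hn hLI HL) => j.
  by apply/negP => Hj; move/negP: H; apply; apply/existsP; exists j.
- move=> [i Hi].
  case: (boolP [forall G in L, Ordinal hn \in G]) => [/sub_varP //|H0].
  exfalso; apply: (no_sub_contra hn (fun d => esym (hLI d)) Hi) => j.
  apply/negP => Hj.
  have /forall_inPn [G GL nG] := H0.
  have jG : j \in G by move/forall_inP: Hj; apply.
  have j0 : j != Ordinal hn by apply: contraNneq nG => <-.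
  set B := Ordinal hn |: (G :\ j).
  have cB : #|G| = #|B|.
    by rewrite /B cardsU1 (cardsD1 j G) jG !inE (negbTE nG) andbF.
  have lx : lex_gt B G.
    apply/existsP; exists (Ordinal hn); rewrite /B !inE eqxx nG /=.
    by apply/forallP.
  have mG : mon_in L (sqf_mon G).
    apply/exists_inP; exists G => //; apply/forall_inP => x xG.
    by rewrite /sqf_mon xG.
  have := proj2 (sub_varP L j) Hj (sqf_mon B) (lexL G B cB lx mG).
  by rewrite /sqf_mon /B !inE eqxx (negbTE j0).
Qed.
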